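(* Let all issues be binary. Fix a vote profile $a$, an agent $j$ and an issue $i$. Consider three uncertainty parameter vectors $r_j,q_j,\hat q_j\in\mathbb R_{\ge0}^p$: - $q_j$ differs from $r_j$ only on one issue $k\ne i$, with $r_j^k<q_j^k$; - $\hat q_j$ differs from $r_j$ only on issue $i$, with $r_j^i<\hat q_j^i$. Let $LD^i_j$, $LQ^i_j$ and $\widehat{LQ}^i_j$ be the sets of local dominance improvement steps of $j$ on issue $i$ at $a$ under $S=\tilde S_{-j}(a;r_j)$, $S=\tilde S_{-j}(a;q_j)$ and $S=\tilde S_{-j}(a;\hat q_j)$, respectively. Then $$LQ^i_j\subseteq LD^i_j\subseteq \widehat{LQ}^i_j.$$
   Context: Issues $\mathcal P=\{1,\dots,p\}$, each with a finite candidate set $D_i$; alternatives are $\mathcal D=\prod_i D_i$. Binary issues means $D_i=\{0,1\}$ for all $i$. There are $n$ agents, and each agent $j$ has a strict linear order $\succ_j$ over $\mathcal D$. A vote profile is $a\in\mathcal D^n$. Score tuples and outcomes: - A score tuple $v=(v^i)_{i\in\mathcal P}$ consists of vectors $v^i\in\mathbb N^{D_i}$. - Plurality outcome $f(v)=(f^i(v))_i$: $f^i(v)$ is the candidate of maximum score $v^i(c)$, with ties broken lexicographically. - For a vote $b\in\mathcal D$, $v+b$ adds one to $v^i(b^i)$ for every issue $i$. - $s_{-j}(a)$ is the score tuple of $a$ without agent $j$'s vote. Uncertainty sets: a distance on score vectors of issue $i$ is candidate-wise if $\delta(s,\tilde s)=\max_{c\in D_i}\hat\delta(s(c),\tilde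 s(c))$ for a monotone function $\hat\delta$. Examples are the $\ell_\infty$ distance $\hat\delta(s,\tilde s)=|s-\tilde s|$ and the multiplicative distance. Given uncertainty parameters $r_j=(r_j^i)_i$, define $$\tilde S^i_{-j}(a;r^i_j)=\{v^i:\delta(v^i,s^i_{-j}(a))\le r^i_j\}, \qquad \tilde S_{-j}(a;r_j)=\prod_i\tilde S^i_{-j}(a;r_j^i).$$ Local dominance: a vote $\hat a_j$ $S$-beats $a_j$ if there is $v\in S$ with $f(v+\hat a_j)\succ_j f(v+a_j)$. The vote $\hat a_j$ $S$-dominates $a_j$ if $\hat a_j$ $S$-beats $a_j$ and $a_j$ does not $S$-beat $\hat a_j$. The set of local dominance improvement (LDI) steps of $j$ on issue $i$ (under $S$) is the set of votes that satisfy all of the following: - they $S$-dominate $a_j$; - they differ from $a_j$ only on issue $i$; - they are not $S$-dominated by any vote differing from $a_j$ only on issue $i$. *)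

(* Defs.v *)
From mathcomp Require Import all_boot all_order all_algebra.
Set Implicit Arguments. Unset Strict Implicit. Unset Printing Implicit Defensive.
Import Order.TTheory GRing.Theory Num.Theory.
Local Open Scope ring_scope.

(* Binary issues: p issues 'I_p, each with candidate set bool (0 = false, 1 = true).
   Alternatives (= votes): {ffun 'I_p -> bool}. Agents: 'I_n. *)
Definition alt (p : nat) := {ffun 'I_p -> bool}.

Definition scores (p : nat) := 'I_p -> bool -> nat.

Definition strict_linear_order (T : eqType) (pr : rel T) : Prop :=
  [/\ irreflexive pr, transitive pr & forall x y, x != y -> pr x y || pr y x].

(* Plurality outcome, ties broken lexicographically (false = 0 wins ties). *)
Definition outcome (p : nat) (v : scores p) : alt p :=
  [ffun i => v i false < v i true]%N.

Definition add_vote (p : nat) (v : scores p) (b : alt p) : scores p :=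
  fun i c => (v i c + (b i == c))%N.

Definition score_minus (p n : nat) (a : 'I_n -> alt p) (j : 'I_n) : scores p :=
  fun i c => #|[set j' : 'I_n | (j' != j) && (a j' i == c)]|.

Definition cw_dist (R : realFieldType) (dhat : nat -> nat -> R)
  (s t : bool -> nat) : R :=
  Num.max (dhat (s false) (t false)) (dhat (s true) (t true)).

Definition monotone_dist (R : realFieldType) (dhat : nat -> nat -> R) : Prop :=
  (forall x, dhat x x = 0) /\
  (forall x y, 0 <= dhat x y) /\
  (forall x y z, (x <= y <= z)%N || (z <= y <= x)%N ->
      dhat x y <= dhat x z /\ dhat y x <= dhat z x).

Definition unc_set (R : realFieldType) (p n : nat)
  (dhat : 'I_p -> nat -> nat -> R) (a : 'I_n -> alt p) (j : 'I_n)
  (r : 'I_p -> R) : scores p -> Prop :=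
  fun v => forall i, cw_dist (dhat i) (v i) (score_minus a j i) <= r i.

Definition Sbeats (p : nat) (S : scores p -> Prop) (pr : rel (alt p))
  (b a : alt p) : Prop :=
  exists v, S v /\ pr (outcome (add_vote v b)) (outcome (add_vote v a)).

Definition Sdominates (p : nat) (S : scores p -> Prop) (pr : rel (alt p))
  (b a : alt p) : Prop :=
  Sbeats S pr b a /\ ~ Sbeats S pr a b.

Definition differs_only_on (p : nat) (i : 'I_p) (b a : alt p) : Prop :=
  forall l, l != i -> b l = a l.

Definition LDI (p : nat) (S : scores p -> Prop) (pr : rel (alt p))
  (aj : alt p) (i : 'I_p) : alt p -> Prop :=
  fun b => [/\ Sdominates S pr b aj, differs_only_on i b aj &
     ~ exists b', differs_only_on i b' aj /\ Sdominates S pr b' b].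

(* Main.v *)
Require Import Defs.
From mathcomp Require Import all_boot all_order all_algebra.
From mathcomp Require Import zify.
Import Order.TTheory GRing.Theory Num.Theory.
Local Open Scope ring_scope.

Set Implicit Arguments. Unset Strict Implicit.

Lemma out_l (p : nat) (v w : scores p) (c d : alt p) (l : 'I_p) :
  v l = w l -> c l = d l ->
  outcome (add_vote v c) l = outcome (add_vote w d) l.
Proof. by move=> e1 e2; rewrite /outcome !ffunE /add_vote e1 e2. Qed.

Lemma pivot (p : nat) (v : scores p) (c d : alt p) (l : 'I_p) :
  outcome (add_vote v c) l != outcome (add_vote v d) l ->
  outcome (add_vote v c) l = c l.
Proof.
rewrite /outcome !ffunE /add_vote.
move: (v l false) (v l true) => x y.
case: (c l); case: (d l) => //=; rewrite ?addn0 ?addn1;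
 by [rewrite eqxx | case: (ltnP x y.+1); case: (ltnP x.+1 y) => // h1 h2; lia].
Qed.

Lemma eq_off (p : nat) (v : scores p) (b c : alt p) (i : 'I_p) :
  differs_only_on i b c ->
  outcome (add_vote v b) i = outcome (add_vote v c) i ->
  outcome (add_vote v b) = outcome (add_vote v c).
Proof.
move=> hd he; apply/ffunP => l.
case: (eqVneq l i) => [->|hl]; first exact: he.
by apply: out_l => //; apply: hd.
Qed.

Lemma dom_self (p : nat) (S : scores p -> Prop) pr b : ~ Sdominates S pr b b.
Proof. by case. Qed.

Lemma LDI_of (p : nat) (S : scores p -> Prop) pr aj (i : 'I_p) b :
  Sdominates S pr b aj -> differs_only_on i b aj -> LDI S pr aj i b.
Proof.
move=> hd hb; split => // -[b' [hb' hd']].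
have hbi : b i != aj i.
  apply/negP => /eqP e.
  have : b = aj by apply/ffunP => l; case: (eqVneq l i) => [->|hl]//; apply: hb.
  by move=> E; rewrite E in hd; exact: (dom_self hd).
case: (eqVneq (b' i) (aj i)) => e.
  have : b' = aj by apply/ffunP => l; case: (eqVneq l i) => [->|hl]//; apply: hb'.
  by move=> E; rewrite E in hd'; case: hd => _; case: hd'.
have : b' = b.
  apply/ffunP => l; case: (eqVneq l i) => [->|hl].
    by move: e hbi; case: (b' i); case: (b i); case: (aj i).
  by rewrite hb' // hb.
by move=> E; rewrite E in hd'; exact: (dom_self hd').
Qed.

Definition sp (p : nat) (v w : scores p) (m : 'I_p) : scores p :=
  fun l => if l == m then w l else v l.

Lemma sub_unc (R : realFieldType) (p n : nat) (dhat : 'I_p -> nat -> nat -> R)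
  (a : 'I_n -> alt p) j (r q : 'I_p -> R) v :
  (forall l, r l <= q l) -> unc_set dhat a j r v -> unc_set dhat a j q v.
Proof. by move=> h hv l; apply: le_trans (hv l) (h l). Qed.

Lemma cw0 (R : realFieldType) (dh : nat -> nat -> R) s :
  monotone_dist dh -> cw_dist dh s s = 0.
Proof. by case=> h _; rewrite /cw_dist !h maxxx. Qed.

Theorem theorem1 (R : realFieldType) (p n : nat)
  (dhat : 'I_p -> nat -> nat -> R) (pref : 'I_n -> rel (alt p))
  (a : 'I_n -> alt p) (j : 'I_n) (i k : 'I_p) (r q qh : 'I_p -> R) :
  (forall l, monotone_dist (dhat l)) ->
  (forall j', strict_linear_order (pref j')) ->
  (forall l, 0 <= r l) -> (forall l, 0 <= q l) -> (forall l, 0 <= qh l) ->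
  k != i ->
  (forall l, l != k -> q l = r l) -> r k < q k ->
  (forall l, l != i -> qh l = r l) -> r i < qh i ->
  forall b : alt p,
    (LDI (unc_set dhat a j q) (pref j) (a j) i b ->
     LDI (unc_set dhat a j r) (pref j) (a j) i b) /\
    (LDI (unc_set dhat a j r) (pref j) (a j) i b ->
     LDI (unc_set dhat a j qh) (pref j) (a j) i b).
Proof.
move=> hmd hlo hr hq hqh hki hqe hrk hqhe hri b.
have [irr _ tot] := hlo j.
have rq : forall l, r l <= q l.
  by move=> l; case: (eqVneq l k) => [->|hl]; [exact: ltW | rewrite hqe].
have rqh : forall l, r l <= qh l.
  by move=> l; case: (eqVneq l i) => [->|hl]; [exact: ltW | rewrite hqhe].
split.
- case=> -[[w [hw hpr]] nbq] hdiff _; apply: LDI_of => //; split.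
  + pose u := sp w (score_minus a j) k.
    have hu : unc_set dhat a j r u.
      move=> l; rewrite /u /sp; case: (eqVneq l k) => [->|hl].
        by rewrite cw0.
      by rewrite -hqe //; apply: hw.
    have hui : u i = w i by rewrite /u /sp eq_sym (negbTE hki).
    have hneq : outcome (add_vote u b) != outcome (add_vote u (a j)).
      apply/negP => /eqP E.
      have Ei : outcome (add_vote w b) i = outcome (add_vote w (a j)) i.
        by rewrite -(@out_l _ _ _ b b _ hui) // -(@out_l _ _ _ (a j) (a j) _ hui) // E.
      by rewrite (eq_off hdiff Ei) irr in hpr.
    case/orP: (tot _ _ hneq) => h; first by exists u.
    by exfalso; apply: nbq; exists u; split => //; apply: sub_unc hu.
  + by move=> [v [hv h]]; apply: nbq; exists v; split => //; apply: sub_unc hv.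
- case=> -[[w [hw hpr]] nbr] hdiff _; apply: LDI_of => //; split.
  + by exists w; split => //; apply: sub_unc hw.
  + move=> [v [hv h]]; apply: nbr.
    pose u := sp v w i.
    have hu : unc_set dhat a j r u.
      move=> l; rewrite /u /sp; case: (eqVneq l i) => [->|hl]; first exact: hw.
      by rewrite -hqhe //; apply: hv.
    have nw : outcome (add_vote w b) i != outcome (add_vote w (a j)) i.
      by apply/negP => /eqP Ei; rewrite (eq_off hdiff Ei) irr in hpr.
    have nv : outcome (add_vote v b) i != outcome (add_vote v (a j)) i.
      by apply/negP => /eqP Ei; rewrite (eq_off hdiff Ei) irr in h.
    have hc : forall c, c = b \/ c = a j ->
        outcome (add_vote u c) = outcome (add_vote v c).
      move=> c hcb; apply/ffunP => l; case: (eqVneq l i) => [->|hl].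
        rewrite (@out_l _ _ _ c c _ (_ : u i = w i)) ?/u ?/sp ?eqxx //.
        case: hcb => ->.
          by rewrite (pivot nw); apply: esym; apply: pivot nv.
        have nw2 := nw; have nv2 := nv; rewrite eq_sym in nw2; rewrite eq_sym in nv2; by rewrite (pivot nw2); apply: esym; apply: pivot nv2.
      by apply: out_l => //; rewrite /u /sp (negbTE hl).
    exists u; split => //.
    by rewrite (hc (a j)) ?(hc b); [| left | right].
Qed.
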